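(* Let $T$ be a Dunford–Schwartz operator on $l_\infty$. Then for each $x\in c_0$ there exists $\widehat{x}\in c_0$ such that $$\Big\|\frac1n\sum_{k=0}^{n-1}T^k(x)-\widehat{x}\Big\|_\infty\to 0 \quad (n\to\infty).$$
   Context: $l_\infty$ is the space of bounded real sequences with $\|x\|_\infty=\sup_n|(x)_n|$; $c_0$ is the subspace of sequences converging to $0$; $l_1$ is the space of absolutely summable sequences with $\|x\|_1=\sum_n|(x)_n|$. A linear operator $T:l_\infty\to l_\infty$ is a Dunford–Schwartz operator if $\|T(x)\|_1\le\|x\|_1$ for all $x\in l_1$ and $\|T(x)\|_\infty\le\|x\|_\infty$ for all $x\in l_\infty$. *)

(* Defs.v *)
From HB Require Import structures.
From mathcomp Require Import all_boot all_order all_algebra.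
From mathcomp Require Import all_classical all_reals all_analysis.
Set Implicit Arguments. Unset Strict Implicit. Unset Printing Implicit Defensive.
Import Order.TTheory GRing.Theory Num.Theory.
Import numFieldNormedType.Exports.
Local Open Scope classical_set_scope.
Local Open Scope ring_scope.

Section SeqSpaces.
Variable R : realType.

Definition in_linf (x : nat -> R) : Prop := exists M : R, forall n, `|x n| <= M.

Definition in_c0 (x : nat -> R) : Prop := x @ \oo --> (0 : R).

Definition in_l1 (x : nat -> R) : Prop :=
  cvg (series (fun k => `|x k|) @ \oo).

Definition norm_inf (x : nat -> R) : R := sup (range (fun n => `|x n|)).

Definition norm_1 (x : nat -> R) : R := limn (series (fun k => `|x k|)).

Definition dunford_schwartz (T : (nat -> R) -> (nat -> R)) : Prop :=
  [/\ (forall x, in_linf x -> in_linf (T x)),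
      (forall (a : R) x y, in_linf x -> in_linf y ->
          T (fun n => a * x n + y n) = (fun n => a * T x n + T y n)),
      (forall x, in_l1 x -> in_l1 (T x) /\ norm_1 (T x) <= norm_1 x)
    & (forall x, in_linf x -> norm_inf (T x) <= norm_inf x)].

Definition ds_cesaro (T : (nat -> R) -> (nat -> R)) (x : nat -> R) (n : nat) : nat -> R :=
  fun i => (n%:R)^-1 * \sum_(k < n) iter k T x i.

End SeqSpaces.

(* Main.v *)
Require Import Defs.
From HB Require Import structures.
From mathcomp Require Import all_boot all_order all_algebra.
From mathcomp Require Import all_classical all_reals all_analysis.
From mathcomp Require Import ring lra.
Import Order.TTheory GRing.Theory Num.Theory.
Import numFieldNormedType.Exports.
Local Open Scope classical_set_scope.
Local Open Scope ring_scope.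
Set Implicit Arguments. Unset Strict Implicit. Unset Printing Implicit Defensive.
Section DS.
Variable R : realType.
Implicit Types (x y z : nat -> R).

Lemma norm_inf_ge x i : in_linf x -> `|x i| <= norm_inf x.
Proof.
move=> [M hM]; apply: ub_le_sup; last by exists i.
by exists M => _ [j _ <-].
Qed.

Lemma norm_inf_le x M : (forall i, `|x i| <= M) -> norm_inf x <= M.
Proof.
move=> hM; apply: ge_sup; first by exists `|x 0%N|, 0%N.
by move=> _ [j _ <-].
Qed.

Lemma norm_inf_ge0 x : in_linf x -> 0 <= norm_inf x.
Proof. move=> h; exact: le_trans (normr_ge0 (x 0%N)) (norm_inf_ge 0 h). Qed.

Lemma linf_lin (a : R) x y : in_linf x -> in_linf y -> in_linf (fun n => a * x n + y n).
Proof.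
move=> [M hM] [N hN]; exists (`|a| * M + N) => n.
rewrite (le_trans (ler_normD _ _)) // normrM lerD // ler_wpM2l //.
Qed.

Lemma linf0 : in_linf (fun _ : nat => 0 : R).
Proof. by exists 0 => n; rewrite normr0. Qed.

Lemma linf_sum K (c : nat -> R) (w : nat -> nat -> R) :
  (forall k, in_linf (w k)) -> in_linf (fun n => \sum_(k < K) c k * w k n).
Proof.
move=> hw; elim: K => [|K IH].
  suff -> : (fun n => \sum_(k < 0) c k * w k n) = (fun _ => 0) by exact: linf0.
  by apply: funext => n; rewrite big_ord0.
suff -> : (fun n => \sum_(k < K.+1) c k * w k n) =
  (fun n => c K * w K n + \sum_(k < K) c k * w k n) by exact: linf_lin.
by apply: funext => n; rewrite big_ord_recr /= addrC.
Qed.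

Variable T : (nat -> R) -> (nat -> R).
Hypothesis Tb : forall x, in_linf x -> in_linf (T x).
Hypothesis Tlin : forall (a : R) x y, in_linf x -> in_linf y ->
          T (fun n => a * x n + y n) = (fun n => a * T x n + T y n).
Hypothesis Tl1 : forall x, in_l1 x -> in_l1 (T x) /\ norm_1 (T x) <= norm_1 x.
Hypothesis Tinf : forall x, in_linf x -> norm_inf (T x) <= norm_inf x.

Lemma T0 : T (fun _ => 0) = (fun _ => 0).
Proof.
have := Tlin (-1) linf0 linf0.
have -> : (fun n : nat => -1 * (0:R) + 0) = (fun _ => 0) by apply: funext => n; rewrite mulr0 addr0.
by move=> ->; apply: funext => n; rewrite mulN1r addNr.
Qed.

Lemma Tsum K (c : nat -> R) (w : nat -> nat -> R) :
  (forall k, in_linf (w k)) ->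
  T (fun n => \sum_(k < K) c k * w k n) = (fun n => \sum_(k < K) c k * T (w k) n).
Proof.
move=> hw; elim: K => [|K IH].
  have -> : (fun n => \sum_(k < 0) c k * w k n) = (fun _ => 0).
    by apply: funext => n; rewrite big_ord0.
  by rewrite T0; apply: funext => n; rewrite big_ord0.
have -> : (fun n => \sum_(k < K.+1) c k * w k n) =
  (fun n => c K * w K n + \sum_(k < K) c k * w k n).
  by apply: funext => n; rewrite big_ord_recr /= addrC.
rewrite Tlin //; last exact: linf_sum.
by rewrite IH; apply: funext => n; rewrite big_ord_recr /= addrC.
Qed.

Lemma Tsub x y : in_linf x -> in_linf y -> T (fun n => x n - y n) = (fun n => T x n - T y n).
Proof.
move=> hx hy; have := Tlin (-1) hy hx.
have -> : (fun n => -1 * y n + x n) = (fun n => x n - y n).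
  by apply: funext => n; rewrite mulN1r addrC.
by move=> ->; apply: funext => n; rewrite mulN1r addrC.
Qed.

Lemma Tnorm x i : in_linf x -> `|T x i| <= norm_inf x.
Proof. by move=> hx; apply: le_trans (norm_inf_ge i (Tb hx)) (Tinf hx). Qed.

Lemma iter_linf k x : in_linf x -> in_linf (iter k T x).
Proof. by move=> hx; elim: k => [|k IH] //=; apply: Tb. Qed.

Lemma iter_norm k x i : in_linf x -> `|iter k T x i| <= norm_inf x.
Proof.
move=> hx; elim: k i => [|k IH] i /=; first exact: norm_inf_ge.
apply: le_trans (Tnorm i (iter_linf k hx)) _.
apply: norm_inf_le => j; exact: IH.
Qed.

Lemma iter_sum j K (c : nat -> R) (w : nat -> nat -> R) :
  (forall k, in_linf (w k)) ->
  iter j T (fun n => \sum_(k < K) c k * w k n) =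
  (fun n => \sum_(k < K) c k * iter j T (w k) n).
Proof.
move=> hw; elim: j => [|j IH] //.
rewrite iterS IH (@Tsum K c (fun k => iter j T (w k))) //.
by move=> k; apply: iter_linf.
Qed.

Lemma iter_sub k x y : in_linf x -> in_linf y ->
  iter k T (fun n => x n - y n) = (fun n => iter k T x n - iter k T y n).
Proof.
move=> hx hy; elim: k => [|k IH] //.
by rewrite iterS IH Tsub //; exact: iter_linf.
Qed.
Definition ee (j : nat) : nat -> R := fun n => (n == j)%:R.

Lemma sum_e (f : nat -> R) M n :
  \sum_(j < M) f j * ee j n = if (n < M)%N then f n else 0.
Proof.
elim: M => [|M IH]; first by rewrite big_ord0.
rewrite big_ord_recr /= IH /ee ltnS.
case: (ltngtP n M) => h /=; rewrite ?mulr0 ?addr0 ?mulr1 ?add0r ?h //.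
Qed.



Lemma linf_e j : in_linf (ee j).
Proof. by exists 1 => n; rewrite /ee; case: (n == j); rewrite ?normr1 ?normr0. Qed.

Lemma series_e j n : series (fun k => `|ee j k|) n = if (j < n)%N then 1 else 0.
Proof.
rewrite seriesEord.
have := sum_e (fun _ => 1) n j.
under eq_bigr do rewrite mul1r.
move=> <-; apply: eq_bigr => k _; rewrite /ee eq_sym.
by case: (j == k); rewrite ?normr1 ?normr0.
Qed.

Lemma cvg_series_e j : series (fun k => `|ee j k|) @ \oo --> (1:R).
Proof.
apply: cvg_near_cst; exists j.+1 => // n /= hn.
by rewrite series_e hn.
Qed.

Lemma col_bound j N : \sum_(i < N) `|T (ee j) i| <= 1.
Proof.
have hl1 : in_l1 (ee j) by apply/cvg_ex; exists 1; exact: cvg_series_e.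
have [hT hn] := Tl1 hl1.
have n1 : norm_1 (ee j) = 1 by rewrite /norm_1; apply: cvg_lim => //; exact: cvg_series_e.
rewrite -n1; apply: le_trans hn.
have -> : \sum_(i < N) `|T (ee j) i| = series (fun k => `|T (ee j) k|) N by rewrite seriesEord.
apply: nondecreasing_cvgn_le => //.
by apply: nondecreasing_series => n _ _.
Qed.
Lemma row_bound i M : \sum_(j < M) `|T (ee j) i| <= 1.
Proof.
pose c j := if 0 <= T (ee j) i then 1 else -1 : R.
pose s := fun n => \sum_(j < M) c j * ee j n.
have hs : in_linf s by apply: linf_sum => k; exact: linf_e.
have hTs : T s = fun n => \sum_(j < M) c j * T (ee j) n by apply: Tsum => k; exact: linf_e.
have -> : \sum_(j < M) `|T (ee j) i| = T s i.
  rewrite hTs; apply: eq_bigr => j _; rewrite /c.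
  case: (lerP 0 (T (ee j) i)) => h; first by rewrite mul1r ger0_norm.
  by rewrite ltr0_norm // mulN1r.
apply: le_trans (ler_norm _) _; apply: le_trans (Tnorm i hs) _.
apply: norm_inf_le => n; rewrite /s sum_e.
case: (n < M)%N; last by rewrite normr0.
by rewrite /c; case: (0 <= _); rewrite ?normrN normr1.
Qed.

Definition S N (y : nat -> R) := \sum_(i < N) y i ^+ 2.
Definition Qle y B := forall N, S N y <= B.
Definition Q y := sup (range (fun N => S N y)).

Lemma S_ge0 N y : 0 <= S N y.
Proof. by apply: sumr_ge0 => i _; exact: sqr_ge0. Qed.

Lemma S_succ N y : S N.+1 y = S N y + y N ^+ 2.
Proof. by rewrite /S big_ord_recr. Qed.

Lemma S_mono N N' y : (N <= N')%N -> S N y <= S N' y.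
Proof.
move=> /subnKC <-; elim: (N' - N)%N => [|k IH]; first by rewrite addn0.
by rewrite addnS S_succ (le_trans IH) // lerDl sqr_ge0.
Qed.

Lemma S_point N i y : (N <= i)%N -> S N y + y i ^+ 2 <= S i.+1 y.
Proof. by move=> h; rewrite S_succ lerD2r S_mono. Qed.

Lemma Q_le y B : Qle y B -> Q y <= B.
Proof.
move=> h; apply: ge_sup; first by exists (S 0 y), 0%N.
by move=> _ [N _ <-].
Qed.

Lemma Qle_Q y B : Qle y B -> Qle y (Q y).
Proof. by move=> h N; apply: ub_le_sup; [exists B => _ [M _ <-] | exists N]. Qed.

Lemma Q_adh y B e : Qle y B -> 0 < e -> exists N, Q y - e < S N y.
Proof.
move=> h he; have [] := @sup_adherent _ (range (fun N => S N y)) e he.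
  by split; [exists (S 0 y), 0%N | exists B => _ [M _ <-]].
by move=> _ [N _ <-] hN; exists N.
Qed.

Lemma Q_ge0 y B : Qle y B -> 0 <= Q y.
Proof. by move=> h; apply: le_trans (S_ge0 0 y) (Qle_Q h 0). Qed.

Lemma Qle_pt y B i : Qle y B -> y i ^+ 2 <= B.
Proof.
move=> h; apply: le_trans (h i.+1); rewrite S_succ lerDr; exact: S_ge0.
Qed.

Lemma Qle_linf y B : Qle y B -> in_linf y.
Proof.
move=> h; exists (1 + B) => i; have := Qle_pt i h.
rewrite -(real_normK (num_real (y i))) => h2.
have := normr_ge0 (y i); nra.
Qed.

Lemma Qle_tail y B e : Qle y B -> 0 < e -> exists M, forall i, (M <= i)%N -> `|y i| <= e.
Proof.
move=> h he; have [N hN] := Q_adh h (mulr_gt0 he he).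
exists N => i hi; have := S_point y hi; have := Qle_Q h i.+1.
rewrite -(real_normK (num_real (y i))) => h1 h2.
have := normr_ge0 (y i); nra.
Qed.

Lemma CS K (a w : nat -> R) :
  (\sum_(k < K) a k * w k) ^+ 2 <= (\sum_(k < K) `|a k|) * (\sum_(k < K) `|a k| * w k ^+ 2).
Proof.
elim: K => [|K IH]; first by rewrite !big_ord0 expr0n /= mul0r.
rewrite !big_ord_recr /=.
set s := \sum_(k < K) a k * w k in IH *.
set A := \sum_(k < K) `|a k| in IH *.
set B := \sum_(k < K) `|a k| * w k ^+ 2 in IH *.
have hA : 0 <= A by apply: sumr_ge0 => k _.
have hB : 0 <= B by apply: sumr_ge0 => k _; apply: mulr_ge0 => //; exact: sqr_ge0.
have ha2 : a K ^+ 2 = `|a K| ^+ 2 by rewrite real_normK // num_real.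
have hs2 : s ^+ 2 = `|s| ^+ 2 by rewrite real_normK // num_real.
have hw2 : w K ^+ 2 = `|w K| ^+ 2 by rewrite real_normK // num_real.
have h1 : (2 * `|s| * `|w K|) ^+ 2 <= (A * w K ^+ 2 + B) ^+ 2.
  rewrite hw2; rewrite hs2 in IH.
  have hW : 0 <= `|w K| ^+ 2 by exact: sqr_ge0.
  have hq := sqr_ge0 (A * `|w K| ^+ 2 - B).
  have hp : `|s| ^+ 2 * `|w K| ^+ 2 <= A * B * `|w K| ^+ 2 by apply: ler_wpM2r.
  have -> : (2 * `|s| * `|w K|) ^+ 2 = 4 * (`|s| ^+ 2 * `|w K| ^+ 2) by ring.
  nra.
have h2 : 2 * `|s| * `|w K| <= A * w K ^+ 2 + B.
  have : 0 <= A * w K ^+ 2 + B by apply: addr_ge0 => //; apply: mulr_ge0 => //; exact: sqr_ge0.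
  have : 0 <= 2 * `|s| * `|w K| by apply: mulr_ge0 => //; apply: mulr_ge0.
  nra.
have h3 : 2 * s * (a K * w K) <= `|a K| * (2 * `|s| * `|w K|).
  apply: le_trans (ler_norm _) _; rewrite !normrM ger0_norm //; lra.
have ha : 0 <= `|a K| by [].
have -> : (s + a K * w K) ^+ 2 = s ^+ 2 + 2 * s * (a K * w K) + a K ^+ 2 * w K ^+ 2 by ring.
rewrite ha2.
have hw0 : 0 <= w K ^+ 2 by exact: sqr_ge0.
nra.
Qed.
Lemma VCS N K (a : nat -> R) (w : nat -> nat -> R) :
  S N (fun i => \sum_(k < K) a k * w k i) <=
  (\sum_(k < K) `|a k|) * (\sum_(k < K) `|a k| * S N (w k)).
Proof.
have hpt : forall i : 'I_N, (\sum_(k < K) a k * w k i) ^+ 2 <=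
   (\sum_(k < K) `|a k|) * (\sum_(k < K) `|a k| * w k i ^+ 2) := fun i => CS K a (fun k => w k i).
rewrite /S; apply: le_trans (ler_sum _ (fun i _ => hpt i)) _.
rewrite -mulr_sumr exchange_big /=; apply: ler_wpM2l.
  by apply: sumr_ge0 => k _.
by apply: ler_sum => k _; rewrite mulr_sumr.
Qed.

Lemma S_T_trunc N M y : S N (T (fun n => \sum_(j < M) y j * ee j n)) <= S M y.
Proof.
rewrite Tsum; last by move=> k; exact: linf_e.
rewrite /S.
have h1 : forall i : 'I_N, (\sum_(j < M) y j * T (ee j) i) ^+ 2 <=
    \sum_(j < M) `|T (ee j) i| * y j ^+ 2.
  move=> i; have := CS M (fun j => T (ee j) i) y.
  under eq_bigr do rewrite mulrC; move=> h; apply: le_trans h _.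
  apply: ler_piMl; last exact: row_bound.
  by apply: sumr_ge0 => k _; apply: mulr_ge0 => //; exact: sqr_ge0.
apply: le_trans (ler_sum _ (fun i _ => h1 i)) _.
rewrite exchange_big /=; apply: ler_sum => j _.
rewrite -mulr_suml; apply: ler_piMl; first exact: sqr_ge0.
exact: col_bound.
Qed.

Lemma Schur y B : Qle y B -> Qle (T y) B.
Proof.
move=> hQ N; have hy := Qle_linf hQ.
set R0 := 1 + B.
have hR0 : forall n, `|y n| <= R0.
  move=> n; have := Qle_pt n hQ; rewrite -(real_normK (num_real (y n))) => h2.
  have := normr_ge0 (y n); rewrite /R0; nra.
have hB0 : 0 <= B by apply: le_trans (S_ge0 0 y) (hQ 0%N).
apply/ler_addgt0Pr => e he.
set c := N%:R * 2 * R0.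
have hc : 0 <= c by rewrite /c; apply: mulr_ge0; [apply: mulr_ge0|rewrite /R0; lra].
set d := e / (c + 1).
have hd : 0 < d by rewrite /d; apply: divr_gt0 => //; lra.
have hdc : d * (c + 1) = e by rewrite /d; field; lra.
have [M hM] := Qle_tail hQ hd.
pose yM := fun n => \sum_(j < M) y j * ee j n.
have hyM : forall n, yM n = if (n < M)%N then y n else 0 by move=> n; rewrite /yM sum_e.
have hyMl : in_linf yM by apply: linf_sum => k; exact: linf_e.
have hdiff : forall i, `|T y i - T yM i| <= d.
  move=> i; have := Tsub hy hyMl => /(congr1 (fun f => f i)) <-.
  have hl : in_linf (fun n => y n - yM n).
    have := linf_lin (-1) hyMl hy; congr in_linf; apply: funext => n.
    by ring.
  apply: le_trans (Tnorm i hl) _.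
  apply: norm_inf_le => n; rewrite hyM; case: ltnP => hn.
    by rewrite subrr normr0 ltW.
  by rewrite subr0; apply: hM.
have hTy : forall i, `|T y i| <= R0.
  by move=> i; apply: le_trans (Tnorm i hy) _; apply: norm_inf_le.
have hTyM : forall i, `|T yM i| <= R0.
  move=> i; apply: le_trans (Tnorm i hyMl) _; apply: norm_inf_le => n.
  rewrite hyM; case: ltnP => _ //; rewrite normr0 /R0; lra.
have hpt : forall i : 'I_N, T y i ^+ 2 <= T yM i ^+ 2 + d * (2 * R0).
  move=> i; have h1 := hdiff i; have h2 := hTy i; have h3 := hTyM i.
  rewrite -(real_normK (num_real (T y i))) -(real_normK (num_real (T yM i))).
  have h4 : `|T y i| <= `|T yM i| + d.
    apply: le_trans (_ : `|T yM i| + `|T y i - T yM i| <= _); last by rewrite lerD2l.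
    by rewrite -{1}(subrK (T yM i) (T y i)) addrC ler_normD.
  have h5 := normr_ge0 (T yM i).
  have h6 := normr_ge0 (T y i).
  nra.
rewrite /S; apply: le_trans (ler_sum _ (fun i _ => hpt i)) _.
rewrite big_split /= sumr_const card_ord.
apply: lerD; first exact: le_trans (S_T_trunc N M y) (hQ M).
rewrite -mulr_natr -hdc /c; nra.
Qed.
Lemma iter_Qle k y B : Qle y B -> Qle (iter k T y) B.
Proof. by move=> h; elim: k => [|k IH] //=; exact: Schur. Qed.

Lemma tele (f : nat -> R) n k :
  \sum_(j < n) f j - \sum_(j < n) f (j + k)%N = \sum_(m < k) f m - \sum_(m < k) f (n + m)%N.
Proof.
have h1 : \sum_(j < n + k) f j = \sum_(j < n) f j + \sum_(m < k) f (n + m)%N.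
  by rewrite big_split_ord.
have h2 : \sum_(j < k + n) f j = \sum_(m < k) f m + \sum_(j < n) f (j + k)%N.
  rewrite big_split_ord /=; congr (_ + _); apply: eq_bigr => j _; by rewrite addnC.
rewrite addnC in h2; move: h1 h2; set a := \sum_(j < _) f j; move=> h1 h2.
have : \sum_(j < n) f j + \sum_(m < k) f (n + m)%N = \sum_(m < k) f m + \sum_(j < n) f (j + k)%N.
  by rewrite -h1 -h2.
move=> h; apply/eqP; rewrite subr_eq addrAC eq_sym subr_eq; apply/eqP.
by rewrite h addrC.
Qed.

Lemma A_Qle n y B : Qle y B -> Qle (fun i => ds_cesaro T y n i) B.
Proof.
move=> hy N; rewrite /ds_cesaro.
have hB : 0 <= B by apply: le_trans (S_ge0 0 y) (hy 0%N).
have -> : (fun i => n%:R^-1 * \sum_(k < n) iter k T y i) =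
   (fun i => \sum_(k < n) (fun _ => n%:R^-1) k * (fun k i => iter k T y i) k i).
  by apply: funext => i; rewrite mulr_sumr.
apply: le_trans (VCS N n (fun _ => n%:R^-1) (fun k i => iter k T y i)) _.
have hr : \sum_(k < n) `|(n%:R^-1 : R)| = n%:R * n%:R^-1.
  by rewrite sumr_const card_ord ger0_norm ?invr_ge0 // mulr_natl.
have hr1 : 0 <= n%:R * (n%:R^-1 : R) <= 1.
  case: n {hr} => [|n]; first by rewrite mul0r lexx ler01.
  by rewrite mulfV ?pnatr_eq0 // ler01 lexx.
case/andP: hr1 => hr0 hr1.
have h2 : \sum_(k < n) `|(n%:R^-1 : R)| * S N (iter k T y) <= n%:R * n%:R^-1 * B.
  rewrite -hr mulr_suml; apply: ler_sum => k _; apply: ler_wpM2l => //.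
  exact: iter_Qle.
rewrite hr; apply: le_trans (ler_wpM2l hr0 h2) _.
apply: le_trans (ler_piMl (mulr_ge0 hr0 hB) hr1) _; exact: ler_piMl hB hr1.
Qed.
Lemma S_sum_w (w : nat -> nat -> R) k N B : (forall m, Qle (w m) B) ->
  S N (fun i => \sum_(m < k) w m i) <= k%:R ^+ 2 * B.
Proof.
move=> hw.
have hB : 0 <= B by apply: le_trans (S_ge0 0 (w 0%N)) (hw 0%N 0%N).
have -> : (fun i => \sum_(m < k) w m i) = (fun i => \sum_(m < k) (fun _ => 1) m * w m i).
  by apply: funext => i; apply: eq_bigr => m _; rewrite mul1r.
apply: le_trans (VCS N k (fun _ => 1) w) _.
rewrite sumr_const card_ord normr1 expr2 -mulrA; apply: ler_wpM2l => //.
have -> : k%:R * B = \sum_(m < k) B by rewrite sumr_const card_ord mulr_natl.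
by apply: ler_sum => m _; rewrite ?normr1 mul1r; exact: hw.
Qed.

Lemma S_scale_sub N (c : R) p q :
  S N (fun i => c * (p i - q i)) <= c ^+ 2 * (2 * S N p + 2 * S N q).
Proof.
rewrite /S.
have -> : c ^+ 2 * (2 * \sum_(i < N) p i ^+ 2 + 2 * \sum_(i < N) q i ^+ 2) =
   \sum_(i < N) c ^+ 2 * (2 * p i ^+ 2 + 2 * q i ^+ 2).
  by rewrite -mulr_sumr big_split /= -!mulr_sumr.
apply: ler_sum => i _.
have h := sqr_ge0 (p i + q i).
have hc := sqr_ge0 c.
have -> : (c * (p i - q i)) ^+ 2 = c ^+ 2 * (p i - q i) ^+ 2 by ring.
rewrite -mulrDr; apply: ler_wpM2l => //; nra.
Qed.

Lemma diff_est x B0 K (l : nat -> R) n N :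
  Qle x B0 -> (forall k, 0 <= l k) -> \sum_(k < K) l k = 1 ->
  S N (fun i => ds_cesaro T x n i - ds_cesaro T (fun i => \sum_(k < K) l k * iter k T x i) n i)
  <= 4 * K%:R ^+ 2 * B0 * (n%:R^-1) ^+ 2.
Proof.
move=> hx hl hl1.
have hB0 : 0 <= B0 by apply: le_trans (S_ge0 0 x) (hx 0%N).
pose u := fun k => iter k T x.
have hu : forall k, in_linf (u k) by move=> k; apply: iter_linf; exact: Qle_linf hx.
have hQu : forall k, Qle (u k) B0 by move=> k; exact: iter_Qle.
pose w := fun k i => n%:R^-1 * (\sum_(m < k) u m i - \sum_(m < k) u (n + m)%N i).
have -> : (fun i => ds_cesaro T x n i - ds_cesaro T (fun i => \sum_(k < K) l k * iter k T x i) n i)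
   = (fun i => \sum_(k < K) l k * w k i).
  apply: funext => i; rewrite /ds_cesaro.
  have -> : \sum_(k < n) iter k T (fun i => \sum_(k0 < K) l k0 * iter k0 T x i) i
     = \sum_(j < n) \sum_(k < K) l k * u (j + k)%N i.
    apply: eq_bigr => j _; rewrite (iter_sum j K l hu).
    by apply: eq_bigr => k _; rewrite /u iterD.
  rewrite exchange_big /= [in X in _ - X]mulr_sumr.
  have -> : n%:R^-1 * \sum_(k < n) iter k T x i = \sum_(k < K) l k * (n%:R^-1 * \sum_(j < n) u j i).
    by rewrite -mulr_suml hl1 mul1r.
  rewrite -sumrB; apply: eq_bigr => k _.
  have E : \sum_(i1 < n) l k * u (i1 + k)%N i = l k * \sum_(i1 < n) u (i1 + k)%N i.
    by rewrite mulr_sumr.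
  rewrite E /w.
  have Ht : \sum_(j < n) u j i - \sum_(j < n) u (j + k)%N i =
    \sum_(m < k) u m i - \sum_(m < k) u (n + m)%N i := tele (fun m => u m i) n k.
  rewrite -Ht.
  move: (\sum_(j < n) u j i) (\sum_(j < n) u (j + k)%N i) => a b.
  rewrite mulrBr mulrBr mulrA mulrA (mulrC (n%:R^-1) (l k)).
  by move: (n%:R^-1 : R) (l k) => c d; ring.
apply: le_trans (VCS N K l w) _.
have hsl : \sum_(k < K) `|l k| = 1 by rewrite -hl1; apply: eq_bigr => k _; rewrite ger0_norm.
rewrite hsl mul1r.
have hw : forall k : 'I_K, S N (w k) <= 4 * K%:R ^+ 2 * B0 * n%:R^-1 ^+ 2.
  move=> k.
  have hs : S N (w k) <= n%:R^-1 ^+ 2 * (2 * S N (fun i => \sum_(m < k) u m i)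
       + 2 * S N (fun i => \sum_(m < k) u (n + m)%N i)) :=
    S_scale_sub N (n%:R^-1) (fun i => \sum_(m < k) u m i) (fun i => \sum_(m < k) u (n + m)%N i).
  have h1 := S_sum_w k N (fun m => hQu m).
  have h2 := S_sum_w k N (fun m => hQu (n + m)%N).
  have hk : k%:R ^+ 2 <= K%:R ^+ 2 :> R.
    have hkR : k%:R <= K%:R :> R by rewrite ler_nat; exact: ltnW (ltn_ord k).
    have := ler0n R k; nra.
  have hn := sqr_ge0 (n%:R^-1 : R).
  apply: le_trans hs _.
  have hkB : k%:R ^+ 2 * B0 <= K%:R ^+ 2 * B0 :> R by apply: ler_wpM2r.
  move: h1 h2 hkB hn hk; move: (S N _) (S N _) (n%:R^-1 ^+ 2 : R) (k%:R ^+ 2 : R) (K%:R ^+ 2 : R).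
  move=> s1 s2 c kk KK h1 h2 hkB hn hk.
  have : s1 + s2 <= 2 * (KK * B0) by lra.
  nra.
have -> : 4 * K%:R ^+ 2 * B0 * n%:R^-1 ^+ 2 = \sum_(k < K) `|l k| * (4 * K%:R ^+ 2 * B0 * n%:R^-1 ^+ 2).
  by rewrite -mulr_suml hsl mul1r.
by apply: ler_sum => k _; apply: ler_wpM2l => //.
Qed.
Lemma S_split N X Z (t : R) : 0 < t ->
  S N X <= (1 + t) * S N Z + (1 + t^-1) * S N (fun i => X i - Z i).
Proof.
move=> ht; rewrite /S !mulr_sumr -big_split /=; apply: ler_sum => i _.
have hs : t^-1 * t = 1 by rewrite mulVf // gt_eqF.
have hs0 : 0 < t^-1 by rewrite invr_gt0.
have h := mulr_ge0 (ltW hs0) (sqr_ge0 (t * Z i - (X i - Z i))).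
have e : t^-1 * (t * Z i - (X i - Z i)) ^+ 2 =
   (t^-1 * t) * t * Z i ^+ 2 - 2 * (t^-1 * t) * Z i * (X i - Z i) + t^-1 * (X i - Z i) ^+ 2 by ring.
rewrite e hs in h.
have -> : X i ^+ 2 = Z i ^+ 2 + 2 * Z i * (X i - Z i) + (X i - Z i) ^+ 2 by ring.
move: h; move: (X i - Z i) (Z i) (t^-1) => D z s h; nra.
Qed.

Lemma S_par N X Y :
  S N (fun i => X i - Y i) = 2 * S N X + 2 * S N Y - 4 * S N (fun i => (X i + Y i) / 2).
Proof.
rewrite /S !mulr_sumr -big_split -sumrB /=; apply: eq_bigr => i _.
by field.
Qed.

Lemma sum_widen (f : nat -> R) n K : (n <= K)%N ->
  \sum_(k < K) (k < n)%:R * f k = \sum_(k < n) f k.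
Proof.
move=> h; rewrite (big_ord_widen _ _ h) [RHS]big_mkcond /=; apply: eq_bigr => k _.
by case: (k < n)%N; rewrite ?mul1r ?mul0r.
Qed.

Lemma avg_widen (f : nat -> R) n K : (n <= K)%N ->
  n%:R^-1 * \sum_(k < n) f k = \sum_(k < K) ((k < n)%:R * n%:R^-1) * f k.
Proof.
move=> h; rewrite -(sum_widen f h) mulr_sumr; apply: eq_bigr => k _; ring.
Qed.
Lemma hilbert x B : Qle x B -> forall e, 0 < e -> exists N0, forall n m,
  (N0 <= n)%N -> (N0 <= m)%N -> forall i, `|ds_cesaro T x n i - ds_cesaro T x m i| <= e.
Proof.
move=> hxB e he.
set B0 := Q x.
have hx : Qle x B0 := Qle_Q hxB.
have hB0 : 0 <= B0 := Q_ge0 hxB.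
pose u k := iter k T x.
have hQu : forall k, Qle (u k) B0 by move=> k; exact: iter_Qle.
pose convS := [set z : nat -> R | exists K (l : nat -> R), [/\ (forall k, 0 <= l k),
   \sum_(k < K) l k = 1 & z = (fun i => \sum_(k < K) l k * u k i)]].
have hconv : forall z, convS z -> Qle z B0.
  move=> z [K [l [hl hl1 ->]]] N.
  apply: le_trans (VCS N K l u) _.
  have hsl : \sum_(k < K) `|l k| = 1 by rewrite -hl1; apply: eq_bigr => k _; rewrite ger0_norm.
  rewrite hsl mul1r.
  have -> : B0 = \sum_(k < K) `|l k| * B0 by rewrite -mulr_suml hsl mul1r.
  by apply: ler_sum => k _; apply: ler_wpM2l => //; exact: hQu.
pose Cset := [set Q z | z in convS].
have hne : Cset !=set0.
  exists (Q (fun i => \sum_(k < 1) (fun _ => 1) k * u k i)).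
  exists (fun i => \sum_(k < 1) (fun _ => 1) k * u k i) => //.
  exists 1%N, (fun _ => 1); split; [by move=> k; exact: ler01 | by rewrite big_ord1 | by []].
have hlb : lbound Cset 0 by move=> _ [z hz <-]; exact: Q_ge0 (hconv z hz).
have hinf : has_inf Cset by split => //; exists 0.
set c := inf Cset.
have hc0 : 0 <= c := lb_le_inf hne hlb.
have hcz : forall z, convS z -> c <= Q z.
  by move=> z hz; apply: ge_inf; [exists 0 | exists z].
set d := e ^+ 2 / 16.
have hd : 0 < d by rewrite /d; apply: divr_gt0 => //; exact: exprn_gt0.
have [_ [z hz <-] hzc] := inf_adherent hd hinf.
case: (hz) => K [l [hl hl1 hzeq]].
set t := d / (c + d).
have ht : 0 < t by rewrite /t; apply: divr_gt0 => //; lra.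
have ht1 : (1 + t) * (c + d) = c + 2 * d by rewrite /t; field; lra.
set E := (1 + t^-1) * (4 * K%:R ^+ 2 * B0).
have hE : 0 <= E.
  rewrite /E; apply: mulr_ge0; first by apply: addr_ge0 => //; rewrite invr_ge0 ltW.
  by apply: mulr_ge0 => //; apply: mulr_ge0 => //; exact: sqr_ge0.
set N0 := (Num.Def.archi_bound (E / d)).+1.
have hX : forall n, (N0 <= n)%N -> forall N, S N (fun i => ds_cesaro T x n i) <= c + 3 * d.
  move=> n hn N.
  have hn1 : (0 < n)%N by apply: leq_trans hn.
  have hnE : E / d < n%:R.
    apply: lt_le_trans (archi_boundP _) _; first by apply: divr_ge0 => //; exact: ltW.
    by rewrite ler_nat; apply: leq_trans hn.
  have h1 := S_split N (fun i => ds_cesaro T x n i) (fun i => ds_cesaro T z n i) ht.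
  have h2 : S N (fun i => ds_cesaro T z n i) <= Q z := A_Qle n (Qle_Q (hconv z hz)) N.
  have h3 : S N (fun i => ds_cesaro T x n i - ds_cesaro T z n i) <=
      4 * K%:R ^+ 2 * B0 * (n%:R^-1) ^+ 2 by rewrite hzeq; exact: diff_est.
  apply: le_trans h1 _.
  have h4 : (1 + t) * S N (fun i => ds_cesaro T z n i) <= c + 2 * d.
    rewrite -ht1; apply: ler_wpM2l; first by apply: addr_ge0 => //; exact: ltW.
    by apply: le_trans h2 _; exact: ltW.
  have h5 : (1 + t^-1) * S N (fun i => ds_cesaro T x n i - ds_cesaro T z n i) <= E * (n%:R^-1) ^+ 2.
    rewrite /E -mulrA; apply: ler_wpM2l; first by apply: addr_ge0 => //; rewrite invr_ge0 ltW.
    exact: h3.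
  have hv : n%:R * n%:R^-1 = 1 :> R by rewrite mulfV // pnatr_eq0 -lt0n.
  have hv0 : 0 < n%:R^-1 :> R by rewrite invr_gt0 ltr0n.
  have hn1R : 1 <= n%:R :> R by rewrite ler1n.
  have hEd : E < d * n%:R by rewrite mulrC -(ltr_pdivrMr _ _ hd).
  move: h4 h5 hv hv0 hn1R hEd; move: (GRing.inv (n%:R : R)) => v; move: (n%:R : R) => w.
  move=> h4 h5 hv hv0 hn1R hEd.
  have hv1 : v <= 1 by nra.
  have a1 : E * v ^+ 2 <= E * v by rewrite expr2; apply: ler_wpM2l => //; nra.
  have a2 : E * v <= d * w * v by apply: ler_wpM2r; [exact: ltW | exact: ltW].
  have a3 : d * w * v = d by rewrite -mulrA hv mulr1.
  have : E * v ^+ 2 <= d by lra.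
  lra.
have hmid : forall n m, (0 < n)%N -> (0 < m)%N ->
    convS (fun i => (ds_cesaro T x n i + ds_cesaro T x m i) / 2).
  move=> n m hn hm.
  exists (n + m)%N, (fun k => ((k < n)%:R * n%:R^-1 + (k < m)%:R * m%:R^-1) / 2); split.
  - move=> k; apply: divr_ge0 => //; apply: addr_ge0; apply: mulr_ge0 => //; rewrite invr_ge0 //.
  - rewrite -mulr_suml big_split /=.
    have s1 := sum_widen (fun _ => (n%:R^-1 : R)) (leq_addr m n).
    have s2 := sum_widen (fun _ => (m%:R^-1 : R)) (leq_addl n m).
    have s3 : forall p, (0 < p)%N -> \sum_(k < p) (p%:R^-1 : R) = 1.
      by move=> p hp; rewrite sumr_const card_ord -(mulr_natr (p%:R^-1 : R) p) mulVf // pnatr_eq0 -lt0n.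
    rewrite /= in s1 s2; rewrite s1 s2 !s3 //.
    by rewrite divff // pnatr_eq0.
  - apply: funext => i; rewrite /ds_cesaro.
    rewrite (avg_widen (fun k => iter k T x i) (leq_addr m n)).
    rewrite (avg_widen (fun k => iter k T x i) (leq_addl n m)).
    rewrite -big_split mulr_suml; apply: eq_bigr => k _ /=; rewrite /u.
    move: (iter k T x i) ((k < n)%:R : R) ((k < m)%:R : R) (n%:R^-1 : R) (m%:R^-1 : R) => a b1 b2 c1 c2.
    by field.
exists N0 => n m hn hm i.
have hn1 : (0 < n)%N by apply: leq_trans hn.
have hm1 : (0 < m)%N by apply: leq_trans hm.
have hXn := hX n hn; have hXm := hX m hm.
set mid := fun i => (ds_cesaro T x n i + ds_cesaro T x m i) / 2.
have hQmid : Qle mid B0 := hconv _ (hmid n m hn1 hm1).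
have [N1 hN1] := Q_adh hQmid hd.
have hcm : c <= Q mid := hcz _ (hmid n m hn1 hm1).
set N2 := maxn N1 i.+1.
have h1 : (ds_cesaro T x n i - ds_cesaro T x m i) ^+ 2 <=
    S N2 (fun i => ds_cesaro T x n i - ds_cesaro T x m i).
  have := S_point (fun i => ds_cesaro T x n i - ds_cesaro T x m i) (leq0n i).
  have := S_ge0 0 (fun i => ds_cesaro T x n i - ds_cesaro T x m i).
  have := S_mono (fun i => ds_cesaro T x n i - ds_cesaro T x m i) (leq_maxr N1 i.+1).
  rewrite -/N2 /=; lra.
have h2 := S_par N2 (fun i => ds_cesaro T x n i) (fun i => ds_cesaro T x m i).
have h3 : S N1 mid <= S N2 mid by apply: S_mono; exact: leq_maxl.
have h4 := hXn N2; have h5 := hXm N2.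
rewrite h2 -/mid in h1.
have hsq : (ds_cesaro T x n i - ds_cesaro T x m i) ^+ 2 <= e ^+ 2.
  have : e ^+ 2 = 16 * d by rewrite /d; field.
  move=> ->; lra.
rewrite -(real_normK (num_real (ds_cesaro T x n i - ds_cesaro T x m i))) in hsq.
have := normr_ge0 (ds_cesaro T x n i - ds_cesaro T x m i); nra.
Qed.
Definition c0e y := forall e, 0 < e -> exists N, forall i, (N <= i)%N -> `|y i| <= e.

Lemma c0P y : in_c0 y -> c0e y.
Proof.
move=> /cvgrPdist_le h e he; have [N _ HN] := h e he.
by exists N => i hi; have := HN i hi; rewrite /= sub0r normrN.
Qed.

Lemma c0P' y : c0e y -> in_c0 y.
Proof.
move=> h; apply/cvgrPdist_le => e he; have [N HN] := h e he.
by exists N => // i hi; rewrite /= sub0r normrN; exact: HN.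
Qed.

Lemma c0_linf y : c0e y -> in_linf y.
Proof.
move=> h; have [N HN] := h 1 ltr01.
exists (1 + \sum_(i < N) `|y i|) => i.
case: (ltnP i N) => hi.
  rewrite (bigD1 (Ordinal hi)) //=.
  have hs : 0 <= \sum_(j < N | j != Ordinal hi) `|y j| by apply: sumr_ge0.
  lra.
by apply: le_trans (HN i hi) _; rewrite lerDl; apply: sumr_ge0.
Qed.

Lemma S_trunc y M N : S N (fun n => \sum_(j < M) y j * ee j n) = S (minn N M) y.
Proof.
elim: N => [|N IH]; first by rewrite min0n /S !big_ord0.
rewrite S_succ IH sum_e; case: (ltnP N M) => h.
  by rewrite (minn_idPl h) S_succ.
by rewrite expr0n /= addr0 (minn_idPr (leqW h)).
Qed.

Lemma Qle_trunc y M : Qle (fun n => \sum_(j < M) y j * ee j n) (S M y).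
Proof. by move=> N; rewrite S_trunc; apply: S_mono; exact: geq_minr. Qed.

Lemma trunc_diff y M e : (forall i, (M <= i)%N -> `|y i| <= e) -> 0 <= e ->
  norm_inf (fun n => y n - \sum_(j < M) y j * ee j n) <= e.
Proof.
move=> h he; apply: norm_inf_le => n; rewrite sum_e; case: ltnP => hn.
  by rewrite subrr normr0.
by rewrite subr0; exact: h.
Qed.

Lemma T_c0 y : c0e y -> c0e (T y).
Proof.
move=> hy e he; have he2 : 0 < e / 2 by apply: divr_gt0.
have [M hM] := hy _ he2.
pose yM := fun n => \sum_(j < M) y j * ee j n.
have hyM : in_linf yM by apply: linf_sum => k; exact: linf_e.
have hyl := c0_linf hy.
have [M2 hM2] := Qle_tail (Schur (Qle_trunc y M)) he2.
exists M2 => i hi.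
have hd : `|T y i - T yM i| <= e / 2.
  have := Tsub hyl hyM => /(congr1 (fun f => f i)) <-.
  have hl : in_linf (fun n => y n - yM n).
    have := linf_lin (-1) hyM hyl; congr in_linf; apply: funext => n.
    by ring.
  apply: le_trans (Tnorm i hl) _; apply: trunc_diff => //; exact: ltW.
have := hM2 i hi; rewrite -/yM => h2.
have : `|T y i| <= `|T y i - T yM i| + `|T yM i|.
  by rewrite -{1}(subrK (T yM i) (T y i)) ler_normD.
lra.
Qed.

Lemma c0_sum K (c : nat -> R) (w : nat -> nat -> R) :
  (forall k, c0e (w k)) -> c0e (fun n => \sum_(k < K) c k * w k n).
Proof.
move=> hw e he; case: K => [|K].
  by exists 0%N => i _; rewrite big_ord0 normr0 ltW.
have hb : forall k : 'I_K.+1, exists N, forall i, (N <= i)%N -> `|c k * w k i| <= e / K.+1%:R.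
  move=> k.
  have hpos : 0 < e / K.+1%:R / (`|c k| + 1).
    by apply: divr_gt0; [apply: divr_gt0 => //; rewrite ltr0n | have := normr_ge0 (c k); lra].
  have [N HN] := hw k _ hpos; exists N => i hi; rewrite normrM.
  have h1 := HN i hi; have h0 := normr_ge0 (c k); have h3 := normr_ge0 (w k i).
  have hc1 : 0 < `|c k| + 1 by lra.
  have e1 : e / K.+1%:R / (`|c k| + 1) * (`|c k| + 1) = e / K.+1%:R by rewrite divfK // gt_eqF.
  move: hpos h1 e1; set p := e / K.+1%:R / (`|c k| + 1) => hpos h1 e1.
  apply: (le_trans (ler_wpM2l h0 h1)); rewrite -e1 [X in _ <= X]mulrC; apply: ler_wpM2r; [exact: ltW hpos | lra].
have [Nf hNf] : exists Nf : 'I_K.+1 -> nat, forall k i, (Nf k <= i)%N -> `|c k * w k i| <= e / K.+1%:R.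
  have := choice hb; case=> f hf; by exists f.
exists (\max_(k < K.+1) Nf k) => i hi.
apply: le_trans (ler_norm_sum _ _ _) _.
have -> : e = \sum_(k < K.+1) e / K.+1%:R.
  by rewrite sumr_const card_ord -(mulr_natr (e / K.+1%:R) K.+1) divfK // pnatr_eq0.
apply: ler_sum => k _; apply: hNf; apply: leq_trans hi; exact: leq_bigmax.
Qed.
Lemma iter_c0 k y : c0e y -> c0e (iter k T y).
Proof. by move=> h; elim: k => [|k IH] //=; exact: T_c0. Qed.

Lemma ces_c0 n y : c0e y -> c0e (fun i => ds_cesaro T y n i).
Proof.
move=> h.
have := @c0_sum n (fun _ => n%:R^-1) (fun k => iter k T y) (fun k => iter_c0 k h).
move=> H e he; have [N HN] := H e he; exists N => i hi; have := HN i hi.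
by rewrite /ds_cesaro mulr_sumr.
Qed.

Lemma ces_norm n y i : in_linf y -> `|ds_cesaro T y n i| <= norm_inf y.
Proof.
move=> hy; rewrite /ds_cesaro normrM.
have h0 := norm_inf_ge0 hy.
case: n => [|n]; first by rewrite big_ord0 normr0 mulr0.
have hs : `|\sum_(k < n.+1) iter k T y i| <= n.+1%:R * norm_inf y.
  apply: le_trans (ler_norm_sum _ _ _) _.
  have -> : n.+1%:R * norm_inf y = \sum_(k < n.+1) norm_inf y by rewrite sumr_const card_ord mulr_natl.
  by apply: ler_sum => k _; exact: iter_norm.
have hp : 0 < `|(n.+1%:R : R)^-1| by rewrite normr_gt0 invr_eq0 pnatr_eq0.
apply: le_trans (ler_wpM2l (ltW hp) hs) _.
by rewrite ger0_norm ?invr_ge0 // mulrA mulVf ?pnatr_eq0 // mul1r.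
Qed.

Lemma ces_sub n x y i : in_linf x -> in_linf y ->
  ds_cesaro T (fun k => x k - y k) n i = ds_cesaro T x n i - ds_cesaro T y n i.
Proof.
move=> hx hy; rewrite /ds_cesaro -mulrBr -sumrB; congr (_ * _); apply: eq_bigr => k _.
by rewrite iter_sub.
Qed.

Lemma cauchy_c0 x : c0e x -> forall e, 0 < e -> exists N0, forall n m,
  (N0 <= n)%N -> (N0 <= m)%N -> forall i, `|ds_cesaro T x n i - ds_cesaro T x m i| <= e.
Proof.
move=> hx e he; have he3 : 0 < e / 3 by apply: divr_gt0.
have [M hM] := hx _ he3.
pose xM := fun n => \sum_(j < M) x j * ee j n.
have hxM : in_linf xM by apply: linf_sum => k; exact: linf_e.
have hxl := c0_linf hx.
have [N0 hN0] := hilbert (Qle_trunc x M) he3.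
exists N0 => n m hn hm i.
have hr : norm_inf (fun n => x n - xM n) <= e / 3 by apply: trunc_diff => //; exact: ltW.
have hrl : in_linf (fun n => x n - xM n).
  have := linf_lin (-1) hxM hxl; congr in_linf; apply: funext => k; by ring.
have h1 := ces_norm n i hrl; have h2 := ces_norm m i hrl.
rewrite !ces_sub // in h1 h2.
have h3 := hN0 n m hn hm i; rewrite -/xM in h3.
move: h1 h2 h3; move: (ds_cesaro T x n i) (ds_cesaro T x m i) (ds_cesaro T xM n i) (ds_cesaro T xM m i).
move=> a b a' b' h1 h2 h3.
have : `|a - b| <= `|a - a'| + `|a' - b'| + `|b' - b|.
  have -> : a - b = (a - a') + (a' - b') + (b' - b) by ring.
  apply: le_trans (ler_normD _ _) _; apply: lerD (ler_normD _ _) (lexx _).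
rewrite (distrC b' b); lra.
Qed.
Lemma tri (a b c : R) : `|a - c| <= `|a - b| + `|b - c|.
Proof.
have e : a - c = (a - b) + (b - c) by ring.
by rewrite {1}e; exact: ler_normD.
Qed.

Lemma main_sec x : in_c0 x -> exists xh : nat -> R, in_c0 xh /\
    (fun n => norm_inf (fun i => ds_cesaro T x n i - xh i)) @ \oo --> (0 : R).
Proof.
move=> /c0P hx.
have hC := cauchy_c0 hx.
have hcv : forall i, cvg ((fun n => ds_cesaro T x n i) @ \oo).
  move=> i; apply/cauchy_cvgP; apply: cauchy_exP => e he.
  have he2 : 0 < e / 2 by apply: divr_gt0.
  have [N hN] := hC _ he2.
  exists (ds_cesaro T x N i); exists N => // n hn /=.
  have := hN N n (leqnn N) hn i.
  rewrite /ball /=; lra.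
pose xh i := lim ((fun n => ds_cesaro T x n i) @ \oo).
have hlim : forall i, (fun n => ds_cesaro T x n i) @ \oo --> xh i by move=> i; exact: hcv i.
have hunif : forall e, 0 < e -> exists N, forall n, (N <= n)%N -> forall i,
    `|ds_cesaro T x n i - xh i| <= e.
  move=> e he; have he2 : 0 < e / 2 by apply: divr_gt0.
  have [N hN] := hC _ he2; exists N => n hn i.
  have [N' _ HN'] := (cvgrPdist_le _ _).1 (hlim i) _ he2.
  have h1 := HN' (maxn N N') (leq_maxr N N'); rewrite /= in h1.
  have h2 := hN n (maxn N N') hn (leq_maxl N N') i.
  move: h1 h2; move: (ds_cesaro T x n i) (ds_cesaro T x (maxn N N') i) (xh i) => a b c h1 h2.
  have := tri a b c; rewrite (distrC b c).
  lra.
exists xh; split.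
  apply: c0P' => e he; have he2 : 0 < e / 2 by apply: divr_gt0.
  have [N hN] := hunif _ he2.
  have [M hM] := ces_c0 N hx he2.
  exists M => i hi; have h1 := hM i hi; have h2 := hN N (leqnn N) i.
  move: h1 h2; move: (ds_cesaro T x N i) (xh i) => a c h1 h2.
  have := tri c a 0; rewrite !subr0 (distrC c a).
  lra.
apply/cvgrPdist_le => e he; have [N hN] := hunif _ he.
exists N => // n hn /=; rewrite sub0r normrN.
have hle := norm_inf_le (hN n hn).
have hge : 0 <= norm_inf (fun i => ds_cesaro T x n i - xh i).
  by apply: norm_inf_ge0; exists e; exact: hN.
by rewrite ger0_norm.
Qed.
End DS.

Theorem theorem3p3 (R : realType) (T : (nat -> R) -> (nat -> R)) :
  dunford_schwartz T ->
  forall x : nat -> R, in_c0 x ->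
  exists xh : nat -> R, in_c0 xh /\
    (fun n => norm_inf (fun i => ds_cesaro T x n i - xh i)) @ \oo --> (0 : R).
Proof.
case=> Tb Tlin Tl1 Tinf x hx.
exact: (main_sec Tb Tlin Tl1 Tinf hx).
Qed.
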